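(* Let $X$ be a graph with real symmetric Hamiltonian $M$ whose entries are algebraic integers, with spectral decomposition $M=\sum_\lambda\lambda E_\lambda$. Suppose perfect state transfer occurs from vertex $a$ to vertex $\alpha\neq a$ at time $\tau$, and that a vertex $v\notin\{a,\alpha\}$ is periodic at time $\tau$. Let $s\in\mathbb{Q}\setminus\{0\}$. Then perfect state transfer occurs from $\mathbf e_a+s\mathbf e_v$ to $\mathbf e_\alpha+s\mathbf e_v$ at time $\tau$ if and only if there exist $\lambda\in\Phi^+_{\mathbf e_a,\mathbf e_\alpha}$ and $\lambda'\in\Phi_{\mathbf e_v}$ such that $\lambda\tau\equiv\lambda'\tau\pmod{2\pi}$.
   Context: $U(t)=e^{-\mathrm{i}tM}$. Perfect state transfer from $\mathbf u$ to $\boldsymbol\mu$ at time $\tau$: $U(\tau)\mathbf u=\eta\boldsymbol\mu$ with $|\eta|=1$; vertex $v$ is periodic at $\tau$ if $U(\tau)\mathbf e_v=\eta\mathbf e_v$ with $|\eta|=1$. $\Phi_{\mathbf v}=\{\lambda:E_\lambda\mathbf v\neq\mathbf 0\}$ is the eigenvalue support, and $\Phi^+_{\mathbf e_a,\mathbf e_\alpha}=\{\lambda: E_\lambda\mathbf e_a=E_\lambda\mathbf e_\alpha\neq\mathbf 0\}$. *)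

(* Defs.v *)
From HB Require Import structures.
From mathcomp Require Import all_boot all_order all_algebra.
From mathcomp Require Import all_classical all_reals all_analysis.
Set Implicit Arguments. Unset Strict Implicit. Unset Printing Implicit Defensive.
Import Order.TTheory GRing.Theory Num.Theory.
Import numFieldNormedType.Exports.
Local Open Scope ring_scope.

Section Defs.
Variable R : realType.
Variable n : nat.

Definition algebraic_integer (x : R) : Prop :=
  exists p : {poly int}, p \is monic /\ root (map_poly intr p) x.

(* Matrix exponential U(t) = exp(-i t M) = C(t) - i S(t), where
   C(t) = sum_k (-1)^k t^(2k)/(2k)! M^(2k)   and
   S(t) = sum_k (-1)^k t^(2k+1)/(2k+1)! M^(2k+1)
   (real and minus-imaginary parts of the exponential power series),
   defined entrywise as limits of the partial sums. *)
Definition cos_partial (M : 'M[R]_n) (t : R) (N : nat) : 'M[R]_n :=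
  \sum_(k < N) (((-1) ^+ k * t ^+ (2 * k)) / ((2 * k)`!)%:R) *: (M ^+ (2 * k)).
Definition sin_partial (M : 'M[R]_n) (t : R) (N : nat) : 'M[R]_n :=
  \sum_(k < N) (((-1) ^+ k * t ^+ (2 * k).+1) / ((2 * k).+1`!)%:R) *: (M ^+ (2 * k).+1).

Definition Ucos (M : 'M[R]_n) (t : R) : 'M[R]_n :=
  \matrix_(i, j) limn (fun N : nat => (cos_partial M t N i j : R^o)).
Definition Usin (M : 'M[R]_n) (t : R) : 'M[R]_n :=
  \matrix_(i, j) limn (fun N : nat => (sin_partial M t N i j : R^o)).

(* Perfect state transfer from real vector u to real vector mu at time tau:
   U(tau) u = eta mu with eta = c + i d, |eta| = 1.  Since U = Ucos - i Usin and
   u, mu are real, this is Ucos u = c mu and - Usin u = d mu. *)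
Definition pst (M : 'M[R]_n) (u mu : 'cV[R]_n) (tau : R) : Prop :=
  exists c d : R, c ^+ 2 + d ^+ 2 = 1 /\
    Ucos M tau *m u = c *: mu /\ - (Usin M tau *m u) = d *: mu.

Definition evec (a : 'I_n) : 'cV[R]_n := delta_mx a 0.

Definition periodic_vertex (M : 'M[R]_n) (v : 'I_n) (tau : R) : Prop :=
  pst M (evec v) (evec v) tau.

Definition spectral_decomposition (M : 'M[R]_n) (m : nat)
    (theta : 'I_m -> R) (E : 'I_m -> 'M[R]_n) : Prop :=
  injective theta /\
  (forall j, E j != 0) /\
  (forall j k, E j *m E k = if j == k then E j else 0) /\
  \sum_(j < m) E j = 1%:M /\
  M = \sum_(j < m) theta j *: E j.

End Defs.

(* Main.v *)
Require Import Defs.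
From HB Require Import structures.
From mathcomp Require Import all_boot all_order all_algebra.
From mathcomp Require Import all_classical all_reals all_analysis.
From mathcomp Require Import ring lra.
Import Order.TTheory GRing.Theory Num.Theory.
Import numFieldNormedType.Exports.
Local Open Scope ring_scope.
Local Open Scope classical_set_scope.

Lemma cvg_sumR (R : realType) (I : Type) (r : seq I) (f : I -> nat -> R^o) (l : I -> R^o) :
  (forall i, f i @ \oo --> l i) ->
  (fun N => \sum_(i <- r) f i N) @ \oo --> \sum_(i <- r) l i.
Proof.
move=> H; elim: r => [|i r IH].
  rewrite big_nil; under eq_cvg do rewrite big_nil; exact: cvg_cst.
rewrite big_cons; under eq_cvg do rewrite big_cons.
exact: cvgD.
Qed.

Section S.
Variables (R : realType) (n m : nat) (M : 'M[R]_n) (theta : 'I_m -> R) (E : 'I_m -> 'M[R]_n).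
Hypothesis hE : forall j k, E j *m E k = if j == k then E j else 0.
Hypothesis hsum : \sum_(j < m) E j = 1%:M.
Hypothesis hM : M = \sum_(j < m) theta j *: E j.

Lemma Mpow k : M ^+ k = \sum_j theta j ^+ k *: E j.
Proof.
elim: k => [|k IH].
  rewrite expr0 -idmxE -hsum. apply: eq_bigr => j _; by rewrite expr0 scale1r.
rewrite exprSr IH [in X in _ * X]hM -mulmxE mulmx_suml; apply: eq_bigr => j _.
rewrite mulmx_sumr (bigD1 j) //= big1 ?addr0.
  by rewrite -scalemxAl -scalemxAr hE eqxx scalerA exprSr.
by move=> l /negbTE jl; rewrite -scalemxAl -scalemxAr hE eq_sym jl !scaler0.
Qed.

Lemma UcosE t : Ucos M t = \sum_j cos (theta j * t) *: E j.
Proof.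
apply/matrixP => i l; rewrite !mxE summxE.
under eq_bigr do rewrite mxE.
apply: cvg_lim => //.
have -> : (fun N => (cos_partial M t N i l : R^o)) =
   (fun N => \sum_j (series (cos_coeff' (theta j * t)) N * E j i l : R^o)).
  apply/funext => N; rewrite /cos_partial summxE.
  under eq_bigr do rewrite mxE Mpow summxE.
  under eq_bigr do rewrite big_distrr.
  rewrite exchange_big /=; apply: eq_bigr => j _.
  rewrite /series /= big_mkord.
  rewrite big_distrl /=; apply: eq_bigr => k _; rewrite mxE /cos_coeff' mul2n.
  by rewrite exprMn -exprnP; ring.
apply: cvg_sumR => j; apply: cvgMr_tmp; exact: cvg_cos_coeff'.
Qed.

Lemma UsinE t : Usin M t = \sum_j sin (theta j * t) *: E j.
Proof.
apply/matrixP => i l; rewrite !mxE summxE.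
under eq_bigr do rewrite mxE.
apply: cvg_lim => //.
have -> : (fun N => (sin_partial M t N i l : R^o)) =
   (fun N => \sum_j (series (sin_coeff' (theta j * t)) N * E j i l : R^o)).
  apply/funext => N; rewrite /sin_partial summxE.
  under eq_bigr do rewrite mxE Mpow summxE.
  under eq_bigr do rewrite big_distrr.
  rewrite exchange_big /=; apply: eq_bigr => j _.
  rewrite /series /= big_mkord.
  rewrite big_distrl /=; apply: eq_bigr => k _; rewrite mxE /sin_coeff' mul2n.
  by rewrite exprMn -exprnP; ring.
apply: cvg_sumR => j; apply: cvgMr_tmp; exact: cvg_sin_coeff'.
Qed.
End S.

Section Trig.
Variable R : realType.

Lemma cos_sin_int (k : int) : cos (k%:~R * (2 * pi) : R) = 1 /\ sin (k%:~R * (2 * pi) : R) = 0.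
Proof.
have hp (p : nat) : cos (p%:R * (2 * pi) : R) = 1 /\ sin (p%:R * (2 * pi) : R) = 0.
  have -> : (p%:R * (2 * pi) : R) = 0 + (pi *+ 2) *+ p by rewrite add0r !mulr_natl.
  by rewrite (periodicn (@cosD2pi R)) (periodicn (@sinD2pi R)) cos0 sin0.
case: k => p; first exact: hp.
by rewrite NegzE mulrNz mulNr cosN sinN; have [-> ->] := hp p.+1; rewrite oppr0.
Qed.

Lemma cos_shift (x : R) (k : int) : cos (x + k%:~R * (2 * pi)) = cos x.
Proof. by have [h1 h2] := cos_sin_int k; rewrite cosD h1 h2 mulr1 mulr0 subr0. Qed.

Lemma sin_shift (x : R) (k : int) : sin (x + k%:~R * (2 * pi)) = sin x.
Proof. by have [h1 h2] := cos_sin_int k; rewrite sinD h1 h2 mulr1 mulr0 addr0. Qed.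

Lemma cos_lt1 (w : R) : 0 < w <= pi -> cos w < 1.
Proof.
move=> /andP[w0 wpi].
rewrite -cos0 ltr_cos ?in_itv /= ?lexx ?pi_ge0 ?(ltW w0) //.
Qed.

Lemma cos_eq1 (z : R) : cos z = 1 -> exists k : int, z = k%:~R * (2 * pi).
Proof.
move=> hz.
have p0 : 0 < 2 * pi :> R by rewrite mulr_gt0 ?pi_gt0.
set k := Num.floor (z / (2 * pi)).
exists k.
set w := z - k%:~R * (2 * pi).
have hw : cos w = 1 by rewrite /w -mulNr -intrN cos_shift.
have hq : z = (z / (2 * pi)) * (2 * pi) by rewrite divfK // gt_eqF.
have f1 := floor_le (z / (2 * pi)).
have f2 := floorD1_gt (z / (2 * pi)).
rewrite intrD /= in f2.
rewrite -/k in f1 f2.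
move: hq f1 f2; set q := z / (2 * pi); set K : R := k%:~R => hq f1 f2.
have w0 : 0 <= w by rewrite /w; nra.
have w2 : w < 2 * pi by rewrite /w; nra.
have [wz|wnz] := eqVneq w 0.
  by move: wz; rewrite /w -/K; move/eqP; rewrite subr_eq0 => /eqP.
have wp : 0 < w by rewrite lt_neqAle eq_sym wnz w0.
have [wpi|piw] := lerP w pi.
  by have := cos_lt1 w; rewrite wp wpi hw ltxx => /(_ isT).
have hw' : cos (2 * pi - w) = 1.
  have -> : 2 * pi - w = - w + 1%:~R * (2 * pi) by rewrite mul1r addrC.
  by rewrite cos_shift cosN.
have : cos (2 * pi - w) < 1 by apply: cos_lt1; apply/andP; split; lra.
by rewrite hw' ltxx.
Qed.
End Trig.


Section Main.
Context {R : realType}.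

Lemma entry_rel (cs sn c d xi yi : R) : c ^+ 2 + d ^+ 2 = 1 -> cs ^+ 2 + sn ^+ 2 = 1 ->
  cs * xi = c * yi -> - (sn * xi) = d * yi ->
  yi = (c * cs - d * sn) * xi /\ xi = (c * cs - d * sn) * yi.
Proof.
move=> h1 h2 e1 e2; split.
  have -> : yi = (c ^+ 2 + d ^+ 2) * yi by rewrite h1 mul1r.
  have -> : (c * cs - d * sn) * xi = c * (cs * xi) + d * (- (sn * xi)) by ring.
  by rewrite e1 e2; ring.
have -> : xi = (cs ^+ 2 + sn ^+ 2) * xi by rewrite h2 mul1r.
have -> : (c * cs - d * sn) * yi = cs * (c * yi) - sn * (d * yi) by ring.
by rewrite -e1 -e2; ring.
Qed.

Lemma nz_entry n (x : 'cV[R]_n) : x != 0 -> exists i, x i 0 != 0.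
Proof.
move=> hx; case: (pickP (fun i => x i 0 != 0)) => [i hi|h]; first by exists i.
case/eqP: hx; apply/matrixP => i k; rewrite (ord1 k) mxE.
by move: (h i) => /negbFE/eqP.
Qed.

Lemma evecE n (a i : 'I_n) : evec R a i 0 = (i == a)%:R.
Proof. by rewrite /evec mxE andbT. Qed.

Lemma coord2 n (al w : 'I_n) (x x' x2 S : R) : al != w -> S != 0 ->
  x *: evec R al + S *: (x' *: evec R w) = x2 *: (evec R al + S *: evec R w) ->
  x = x2 /\ x' = x2.
Proof.
move=> aw S0 h.
have e1 := congr1 (fun A : 'cV[R]_n => A al 0) h.
have e2 := congr1 (fun A : 'cV[R]_n => A w 0) h.
move: e1 e2; rewrite /= !mxE !eqxx (negbTE aw) eq_sym (negbTE aw) /=.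
rewrite !mulr0 !mulr1 !addr0 !add0r => -> e2; split; first by rewrite mulr1.
by apply: (mulfI S0); rewrite e2 mulrC.
Qed.

End Main.

Local Close Scope classical_set_scope.

Theorem mainTheorem7 (R : realType) (n : nat) (M : 'M[R]_n)
  (m : nat) (theta : 'I_m -> R) (E : 'I_m -> 'M[R]_n)
  (a alpha v : 'I_n) (tau : R) (s : rat) :
  M^T = M ->
  (forall i j, algebraic_integer (M i j)) ->
  spectral_decomposition M theta E ->
  a != alpha ->
  pst M (evec R a) (evec R alpha) tau ->
  v != a -> v != alpha ->
  periodic_vertex M v tau ->
  s != 0 ->
  pst M (evec R a + ratr s *: evec R v) (evec R alpha + ratr s *: evec R v) tau <->
  (exists j j' : 'I_m,
     (E j *m evec R a = E j *m evec R alpha /\ E j *m evec R a != 0) /\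
     E j' *m evec R v != 0 /\
     exists k : int, theta j * tau - theta j' * tau = k%:~R * (2 * pi)).
Proof.
move=> _ _ [_ [_ [hE [hsum hM]]]] aa [c [d [hcd [hc hd]]]] va vaa
  [c' [d' [hcd' [hc' hd']]]] s0.
pose cs j := cos (theta j * tau); pose sn j := sin (theta j * tau).
have EC j : E j *m Ucos M tau = cs j *: E j.
  rewrite (@UcosE _ _ _ _ _ _ hE hsum hM) mulmx_sumr (bigD1 j) //= big1 ?addr0.
    by rewrite -scalemxAr hE eqxx.
  by move=> l /negbTE jl; rewrite -scalemxAr hE eq_sym jl scaler0.
have ES j : E j *m Usin M tau = sn j *: E j.
  rewrite (@UsinE _ _ _ _ _ _ hE hsum hM) mulmx_sumr (bigD1 j) //= big1 ?addr0.
    by rewrite -scalemxAr hE eqxx.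
  by move=> l /negbTE jl; rewrite -scalemxAr hE eq_sym jl scaler0.
have proj (u mu : 'cV[R]_n) (c0 d0 : R) :
    Ucos M tau *m u = c0 *: mu -> - (Usin M tau *m u) = d0 *: mu -> forall j i,
    cs j * (E j *m u) i 0 = c0 * (E j *m mu) i 0 /\
    - (sn j * (E j *m u) i 0) = d0 * (E j *m mu) i 0.
  move=> h1 h2 j i; split.
    have := congr1 (fun A => (E j *m A) i 0) h1.
    by rewrite /= mulmxA EC -scalemxAl -scalemxAr !mxE.
  have := congr1 (fun A => (E j *m A) i 0) h2.
  by rewrite /= mulmxN mulmxA ES -scalemxAl -scalemxAr !mxE.
have trig j : cs j ^+ 2 + sn j ^+ 2 = 1 by exact: cos2Dsin2.
have phase (u mu : 'cV[R]_n) (c0 d0 : R) :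
    Ucos M tau *m u = c0 *: mu -> - (Usin M tau *m u) = d0 *: mu -> forall j,
    E j *m u = E j *m mu -> E j *m u != 0 -> c0 = cs j /\ d0 = - sn j.
  move=> h1 h2 j exy /(nz_entry _) [i hi].
  have [p1 p2] := proj _ _ _ _ h1 h2 j i.
  rewrite -exy in p1 p2; split.
    by apply: (mulIf hi); rewrite p1.
  by apply: (mulIf hi); rewrite -p2 mulNr.
have sumE (u : 'cV[R]_n) : \sum_j (E j *m u) = u by rewrite -mulmx_suml hsum mul1mx.
have [jp [hxy hx0]] : exists j, E j *m evec R a = E j *m evec R alpha /\ E j *m evec R a != 0.
  case: (pickP (fun j => (E j *m evec R a == E j *m evec R alpha) && (E j *m evec R a != 0))) =>
    [j /andP[/eqP h1 h2]|hn]; first by exists j.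
  exfalso.
  have neg j : E j *m evec R alpha = - (E j *m evec R a).
    have er i := entry_rel _ _ _ _ _ _ hcd (trig j) (proj _ _ _ _ hc hd j i).1 (proj _ _ _ _ hc hd j i).2.
    have [x0|xn0] := eqVneq (E j *m evec R a) 0.
      apply/matrixP => i k; rewrite (ord1 k).
      have [-> _] := er i; by rewrite x0 !mxE mulr0 oppr0.
    have [i0 hi0] := nz_entry _ _ xn0.
    set r := c * cs j - d * sn j in er.
    have rr : r * r = 1.
      have [e1 e2] := er i0; apply: (mulIf hi0); rewrite mul1r -mulrA -e1 -e2 //.
    have : (r - 1) * (r + 1) == 0.
      by apply/eqP; rewrite -[RHS](subrr (r * r)) [X in _ = _ - X]rr; ring.
    rewrite mulf_eq0 subr_eq0 addr_eq0 => /orP[/eqP r1|/eqP r1].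
      move: (hn j); rewrite xn0 andbT.
      have -> : E j *m evec R alpha = E j *m evec R a.
        by apply/matrixP => i k; rewrite (ord1 k); have [-> _] := er i; rewrite r1 mul1r.
      by rewrite eqxx.
    apply/matrixP => i k; rewrite (ord1 k) [RHS]mxE.
    by have [-> _] := er i; rewrite r1 mulN1r.
  have := sumE (evec R alpha); under eq_bigr do rewrite neg.
  rewrite sumrN sumE => /(congr1 (fun A : 'cV[R]_n => A alpha 0)).
  rewrite mxE !evecE eqxx eq_sym (negbTE aa) /= => /eqP.
  by rewrite oppr0 eq_sym oner_eq0.
have [jv hjv] : exists j, E j *m evec R v != 0.
  case: (pickP (fun j => E j *m evec R v != 0)) => [j hj|hn]; first by exists j.
  exfalso; have := sumE (evec R v).
  rewrite big1 => [/(congr1 (fun A : 'cV[R]_n => A v 0))|j _]; last by move: (hn j) => /negbFE/eqP.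
  by rewrite mxE evecE eqxx => /eqP; rewrite eq_sym oner_eq0.
have [ec ed] := phase _ _ _ _ hc hd jp hxy hx0.
have pstE : pst M (evec R a + ratr s *: evec R v) (evec R alpha + ratr s *: evec R v) tau <->
    c = c' /\ d = d'.
  split.
    move=> [c2 [d2 [_ [h1 h2]]]].
    rewrite mulmxDr -scalemxAr hc hc' in h1.
    rewrite mulmxDr opprD -scalemxAr -scalerN hd hd' in h2.
    have hS : ratr s != 0 :> R by rewrite fmorph_eq0.
    have vaa' : alpha != v by rewrite eq_sym.
    have [<- <-] := @coord2 _ _ _ _ _ _ _ _ vaa' hS h1.
    by have [<- <-] := @coord2 _ _ _ _ _ _ _ _ vaa' hS h2.
  case=> ? ?; subst c' d'; exists c, d; split => //.
  split.
    by rewrite mulmxDr -scalemxAr hc hc' scalerDr !scalerA mulrC.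
  by rewrite mulmxDr opprD -scalemxAr -scalerN hd hd' scalerDr !scalerA mulrC.
rewrite pstE; split.
  case=> ecc edd.
  have [ec' ed'] := phase _ _ _ _ hc' hd' jv erefl hjv.
  exists jp, jv; split; first by []. split => //.
  apply: cos_eq1; rewrite cosB.
  change (cs jp * cs jv + sn jp * sn jv = 1).
  have sj : sn jp = - d by rewrite ed opprK.
  have sj' : sn jv = - d by rewrite edd ed' opprK.
  rewrite -ec -ec' -ecc sj sj' -hcd; ring.
case=> [j [j' [[h1 h2] [h3 [k hk]]]]].
have [e1 e2] := phase _ _ _ _ hc hd j h1 h2.
have [e3 e4] := phase _ _ _ _ hc' hd' j' erefl h3.
have ht : theta j * tau = theta j' * tau + k%:~R * (2 * pi) by rewrite -hk addrC subrK.
by rewrite e1 e2 e3 e4 /cs /sn ht cos_shift sin_shift.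
Qed.
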